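(* For every $t\in\mathtt T_J$: $t$ is a $\to_{d\beta}$-normal form if and only if $t\in\mathtt m$, where $\mathtt m$ and $\mathtt m_{var}$ are the sets of terms generated by the grammar $\mathtt m_{var} ::= x \mid \mathtt m_{var}(\mathtt m, y.\mathtt m_{var})$ and $\mathtt m ::= x \mid \lambda x.\mathtt m \mid \mathtt m_{var}(\mathtt m, y.\mathtt m)$.
   Context: Terms $\mathtt T_J$: $t,u,r ::= x \mid \lambda x.t \mid t(u,y.r)$ ($y$ bound in $r$), up to $\alpha$-equivalence; $\{u/x\}t$ is capture-avoiding substitution. List contexts: $\mathtt D ::= \Diamond \mid t(u,y.\mathtt D)$, $\mathtt D\langle s\rangle$ denoting hole filling. Distant beta: $\mathtt D\langle\lambda x.t\rangle(u,y.r) \mapsto_{d\beta} \{\{u/x\}\mathtt D\langle t\rangle/y\}r$ (variables bound by $\mathtt D$ not free in $u$, $x$ not occurring in $\mathtt D$), and $\to_{d\beta}$ is its closure under all term contexts. A normal form is a term with no $\to_{d\beta}$-reduct. *)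

(* Defs.v *)
(* Terms of T_J in de Bruijn representation (terms up to
   alpha-equivalence).  Var n is the variable with de Bruijn index n;
   Lam t binds index 0 in t; App t u r is t(u, y.r) with y = index 0 in r. *)
From Stdlib Require Import Arith.

Inductive term : Type :=
| Var : nat -> term
| Lam : term -> term
| App : term -> term -> term -> term.

Fixpoint lift (d c : nat) (t : term) : term :=
  match t with
  | Var n => if Nat.ltb n c then Var n else Var (n + d)
  | Lam t1 => Lam (lift d (S c) t1)
  | App t1 u r => App (lift d c t1) (lift d c u) (lift d (S c) r)
  end.

(* subst j s t : capture-avoiding substitution of s (a term living in the
   context outside the j innermost binders) for the index j of t; the
   binder for j disappears, so indices above j are decremented. *)
Fixpoint subst (j : nat) (s : term) (t : term) : term :=
  match t with
  | Var n =>
      if Nat.ltb n j then Var n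
      else if Nat.eqb n j then lift j 0 s
      else Var (pred n)
  | Lam t1 => Lam (subst (S j) s t1)
  | App t1 u r => App (subst j s t1) (subst j s u) (subst (S j) s r)
  end.

Inductive lctx : Type :=
| LHole : lctx
| LApp : term -> term -> lctx -> lctx.

Fixpoint fill (D : lctx) (s : term) : term :=
  match D with
  | LHole => s
  | LApp t u D' => App t u (fill D' s)
  end.

Fixpoint depth (D : lctx) : nat :=
  match D with
  | LHole => 0
  | LApp _ _ D' => S (depth D')
  end.

(* Distant beta at the root:
   D<lam x.t>(u, y.r) |-> {{u/x}D<t> / y} r.
   In de Bruijn form the side conditions (variables bound by D not free in u,
   x not occurring in D) are automatic: u is lifted over the depth D binders
   of D, and x (index 0 of the body) only occurs in the body t. *)
Inductive dbeta_root : term -> term -> Prop :=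
| DBeta : forall (D : lctx) (t u r : term),
    dbeta_root (App (fill D (Lam t)) u r)
               (subst 0 (fill D (subst 0 (lift (depth D) 0 u) t)) r).

Inductive dbeta : term -> term -> Prop :=
| dbeta_base : forall t t', dbeta_root t t' -> dbeta t t'
| dbeta_lam : forall t t', dbeta t t' -> dbeta (Lam t) (Lam t')
| dbeta_app1 : forall t t' u r, dbeta t t' -> dbeta (App t u r) (App t' u r)
| dbeta_app2 : forall t u u' r, dbeta u u' -> dbeta (App t u r) (App t u' r)
| dbeta_app3 : forall t u r r', dbeta r r' -> dbeta (App t u r) (App t u r').

Definition normal_form (t : term) : Prop := ~ exists t', dbeta t t'.

Inductive m_var : term -> Prop :=
| mv_var : forall n, m_var (Var n)
| mv_app : forall t u r, m_var t -> m_nf u -> m_var r -> m_var (App t u r)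
with m_nf : term -> Prop :=
| m_var_ : forall n, m_nf (Var n)
| m_lam : forall t, m_nf t -> m_nf (Lam t)
| m_app : forall t u r, m_var t -> m_nf u -> m_nf r -> m_nf (App t u r).

(* Main.v *)
Require Import Defs.

Lemma mv_nf : forall t, m_var t -> m_nf t.
Proof. induction t; intros H; inversion H; subst; constructor; auto. Qed.

Lemma fwd : forall t, (m_var t -> normal_form t /\ forall D s, t <> fill D (Lam s))
                      /\ (m_nf t -> normal_form t).
Proof.
  induction t as [n|t IH|t IHt u IHu r IHr].
  - split; intros _; [split|]; try (intros [t' H]; inversion H; subst;
      match goal with H : dbeta_root _ _ |- _ => inversion H end).
    intros D s E; destruct D; discriminate.
  - split; intros H.
    + inversion H.
    + inversion H; subst. destruct IH as [_ IH]. specialize (IH H1).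
      intros [t' Hs]; inversion Hs; subst.
      * inversion H0.
      * apply IH; eauto.
  - assert (Happ : m_var t -> m_nf u -> m_nf r -> normal_form (App t u r)).
    { intros Ht Hu Hr [t' Hs]. destruct (proj1 IHt Ht) as [Nt' Nt].
      inversion Hs; subst.
      + inversion H; subst. eapply Nt; eauto.
      + apply Nt'; eauto.
      + apply (proj2 IHu Hu); eauto.
      + apply (proj2 IHr Hr); eauto. }
    split; intros H; inversion H; subst.
    + split.
      * apply Happ; auto. apply mv_nf; auto.
      * intros D s E. destruct D; simpl in E; inversion E; subst.
        apply (proj2 (proj1 IHr H5) D s). reflexivity.
    + apply Happ; auto.
Qed.

Lemma normal_sub : forall t u r, normal_form (App t u r) ->
  normal_form t /\ normal_form u /\ normal_form r.
Proof.
  intros t u r N; repeat split; intros [x H]; apply N; eexists;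
  [apply dbeta_app1|apply dbeta_app2|apply dbeta_app3]; eauto.
Qed.

Lemma bwd : forall t, normal_form t ->
  m_nf t /\ (m_var t \/ exists D s, t = fill D (Lam s)).
Proof.
  induction t as [n|t IH|t IHt u IHu r IHr]; intros N.
  - split; [constructor|left; constructor].
  - split.
    + constructor. apply IH. intros [x H]; apply N; eexists; apply dbeta_lam; eauto.
    + right. exists LHole, t; reflexivity.
  - destruct (normal_sub _ _ _ N) as (Nt & Nu & Nr).
    destruct (IHt Nt) as [_ [Vt | (D & s & E)]].
    2:{ exfalso; apply N; subst; eexists; apply dbeta_base; constructor. }
    destruct (IHu Nu) as [Mu _]. destruct (IHr Nr) as [Mr [Vr | (D & s & E)]].
    + split; [constructor; auto|left; constructor; auto].
    + split; [constructor; auto|]. right. exists (LApp t u D), s. subst; reflexivity.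
Qed.

Theorem mainTheorem2 : forall t : term, normal_form t <-> m_nf t.
Proof.
  intros t; split.
  - intros N; apply (bwd t N).
  - intros M; apply (proj2 (fwd t) M).
Qed.
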